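(* Consider the Beverton–Holt equation $u(t+1)=\dfrac{\mu K(t)u(t)}{K(t)+(\mu-1)u(t)}$, $t\in\mathbb Z_+$, where $\mu>1$, $\tau\in\mathbb N$, and $K:\mathbb Z_+\to\mathbb R$ is asymptotically $\tau$-periodic with $\alpha\le K(t)\le\beta$ for all $t$, for some constants $0<\alpha\le\beta$. Then for every initial value $u\ge0$ the solution $\varphi(t,u,K)$ with $\varphi(0,u,K)=u$ is asymptotically $\tau$-periodic.
   Context: A sequence $K$ is asymptotically $\tau$-periodic if $K=P+R$ with $P(t+\tau)=P(t)$ for all $t\in\mathbb Z_+$ and $R(t)\to0$ as $t\to\infty$. A solution is asymptotically $\tau$-periodic if it differs from a $\tau$-periodic sequence by a sequence tending to $0$. *)

(* Defs.v *)
From Stdlib Require Import Reals.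
Open Scope R_scope.

Definition asymp_periodic (tau : nat) (K : nat -> R) : Prop :=
  exists P Rm : nat -> R,
    (forall t, K t = P t + Rm t) /\
    (forall t, P (t + tau)%nat = P t) /\
    Un_cv Rm 0.

Fixpoint bh_sol (mu : R) (K : nat -> R) (u : R) (t : nat) : R :=
  match t with
  | O => u
  | S n => let x := bh_sol mu K u n in mu * K n * x / (K n + (mu - 1) * x)
  end.

(* Main.v *)
Require Import Defs.
From Stdlib Require Import Reals Lra Lia.
Open Scope R_scope.

Fixpoint wr (a : R) (c : nat -> R) (x : R) (n : nat) : R :=
  match n with O => x | S n => a * wr a c x n + c n end.

Lemma wr_aff a c x n : wr a c x n = a ^ n * x + wr a c 0 n.
Proof. induction n; simpl. ring. rewrite IHn. ring. Qed.

Lemma wr_lb a c x m : 0 <= a -> 0 <= m -> (forall n, m <= c n) -> m <= x ->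
  forall n, m <= wr a c x n.
Proof.
intros Ha Hm Hc Hx n; induction n; simpl; auto.
assert (0 <= a * wr a c x n) by (apply Rmult_le_pos; lra).
specialize (Hc n); lra.
Qed.

Lemma cv_bound (r e : nat -> R) C N0 : Un_cv r 0 -> 0 < C ->
  (forall t, (N0 <= t)%nat -> Rabs (e t) <= C * Rabs (r t)) -> Un_cv e 0.
Proof.
intros Hr HC Hb eps Heps.
destruct (Hr (eps/C)) as [N HN]. apply Rdiv_lt_0_compat; lra.
exists (N+N0)%nat. intros n Hn. unfold Rdist in *. rewrite Rminus_0_r.
specialize (HN n ltac:(lia)). rewrite Rminus_0_r in HN.
eapply Rle_lt_trans. apply Hb; lia.
replace eps with (C*(eps/C)) by (field; lra).
apply Rmult_lt_compat_l; auto.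
Qed.

Lemma inv_diff_bound m x y : 0 < m -> m <= x -> m <= y ->
  Rabs (/x - /y) <= / (m*m) * Rabs (x - y).
Proof.
intros Hm Hx Hy.
replace (/x - /y) with (- (x - y) * / (x*y)) by (field; lra).
rewrite Rabs_mult, Rabs_Ropp, Rabs_inv, (Rabs_pos_eq (x*y)) by nra.
rewrite (Rmult_comm (Rabs (x - y))). apply Rmult_le_compat_r. apply Rabs_pos.
apply Rinv_le_contravar; nra.
Qed.

Lemma lin_cv (a : R) (d e : nat -> R) : 0 <= a < 1 ->
  (forall t, d (S t) = a * d t + e t) -> Un_cv e 0 -> Un_cv d 0.
Proof.
intros Ha Hd He eps Heps.
destruct (He (eps*(1-a)/2)) as [N HN]. apply Rdiv_lt_0_compat; nra.
assert (Hb : forall k, Rabs (d (N+k)%nat) <= a^k * Rabs (d N) + eps/2).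
{ induction k. rewrite Nat.add_0_r. simpl. lra.
  replace (N + S k)%nat with (S (N+k)) by lia. rewrite Hd.
  specialize (HN (N+k)%nat ltac:(lia)). unfold Rdist in HN; rewrite Rminus_0_r in HN.
  eapply Rle_trans. apply Rabs_triang. rewrite Rabs_mult, (Rabs_pos_eq a) by lra.
  simpl pow.
  assert (a * Rabs (d (N+k)%nat) <= a * (a ^ k * Rabs (d N) + eps / 2)) by
    (apply Rmult_le_compat_l; lra).
  nra. }
set (D := Rabs (d N) + 1).
assert (HD : 0 < D) by (unfold D; pose proof (Rabs_pos (d N)); lra).
destruct (pow_lt_1_zero a ltac:(rewrite Rabs_pos_eq; lra) (eps/2/D)) as [M HM].
{ apply Rdiv_lt_0_compat; lra. }
exists (N+M)%nat. intros n Hn.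
replace n with (N + (n-N))%nat by lia.
unfold Rdist; rewrite Rminus_0_r.
eapply Rle_lt_trans. apply Hb.
specialize (HM (n-N)%nat ltac:(lia)).
rewrite Rabs_pos_eq in HM by (apply pow_le; lra).
assert (HaD : a^(n-N) * D < eps/2).
{ replace (eps/2) with (eps/2/D*D) by (field; lra).
  apply Rmult_lt_compat_r; auto. }
assert (0 <= a^(n-N)) by (apply pow_le; lra).
unfold D in HaD. nra.
Qed.

Lemma per_iter (P : nat -> R) tau : (forall t, P (t + tau)%nat = P t) ->
  forall n t, P (t + n * tau)%nat = P t.
Proof.
intros H n; induction n; intro t. rewrite Nat.mul_0_l, Nat.add_0_r; auto.
replace (t + S n * tau)%nat with ((t + n*tau) + tau)%nat by lia.
rewrite H; auto.
Qed.

Theorem mainTheorem20 (mu : R) (tau : nat) (K : nat -> R) (alpha beta : R)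
  (hmu : 1 < mu) (htau : (0 < tau)%nat)
  (hK : asymp_periodic tau K)
  (halpha : 0 < alpha) (hab : alpha <= beta)
  (hbounds : forall t, alpha <= K t <= beta)
  (u : R) (hu : 0 <= u) :
  asymp_periodic tau (bh_sol mu K u).
Proof.
destruct hK as [P [Rm [HKP [HPper HR]]]].
destruct (Req_dec u 0) as [Hu0|Hu0].
{ exists (fun _ => 0), (fun _ => 0). split; [|split].
  - intro t; induction t; simpl. lra. rewrite IHt. unfold Rdiv. ring.
  - auto.
  - intros eps Heps; exists O; intros; unfold Rdist; rewrite Rminus_0_r, Rabs_R0; lra. }
assert (Hupos : 0 < u) by lra.
set (a := / mu).
assert (Ha : 0 < a < 1).
{ unfold a; split. apply Rinv_0_lt_compat; lra.
  rewrite <- Rinv_1. apply Rinv_lt_contravar; lra. }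
assert (HPb : forall t, alpha <= P t <= beta).
{ intro t. pose proof (per_iter P tau HPper) as Hit.
  split.
  - destruct (Rlt_or_le (P t) alpha) as [Hl|Hl]; auto. exfalso.
    destruct (HR (alpha - P t)) as [N HN]; [lra|].
    specialize (HN (t + N*tau)%nat ltac:(nia)). unfold Rdist in HN.
    rewrite Rminus_0_r in HN.
    pose proof (hbounds (t + N*tau)%nat). rewrite HKP, Hit in H.
    pose proof (Rle_abs (Rm (t + N * tau)%nat)). lra.
  - destruct (Rlt_or_le beta (P t)) as [Hl|Hl]; auto. exfalso.
    destruct (HR (P t - beta)) as [N HN]; [lra|].
    specialize (HN (t + N*tau)%nat ltac:(nia)). unfold Rdist in HN.
    rewrite Rminus_0_r in HN.
    pose proof (hbounds (t + N*tau)%nat). rewrite HKP, Hit in H.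
    pose proof (Rle_abs (- Rm (t + N * tau)%nat)). rewrite Rabs_Ropp in H0. lra. }
set (m := (1-a)/beta).
assert (Hm : 0 < m) by (unfold m; apply Rdiv_lt_0_compat; lra).
assert (Hdivlb : forall X, alpha <= X <= beta -> m <= (1-a)/X).
{ intros X HX. unfold m, Rdiv. apply Rmult_le_compat_l. lra.
  apply Rinv_le_contravar; lra. }
set (cP := fun t => (1-a) / P t).
assert (HcP : forall t, m <= cP t) by (intro; apply Hdivlb; auto).
set (g0 := wr a cP 0 tau).
assert (Hg0 : m <= g0).
{ unfold g0. destruct tau as [|k]; [lia|]. simpl.
  pose proof (wr_lb a cP 0 0 ltac:(lra) ltac:(lra) ltac:(intro; specialize (HcP n); lra)
    ltac:(lra) k).
  assert (0 <= a * wr a cP 0 k) by (apply Rmult_le_pos; lra).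
  specialize (HcP k); lra. }
set (q := a ^ tau).
assert (Hq : 0 <= q < 1) by (apply pow_lt_1_compat; lra || lia).
set (w0 := g0 / (1 - q)).
assert (Hw0 : g0 <= w0).
{ unfold w0. apply Rmult_le_reg_r with (1 - q). lra.
  unfold Rdiv; rewrite Rmult_assoc, Rinv_l by lra. nra. }
set (w := wr a cP w0).
assert (Hwlb : forall t, m <= w t).
{ intro; apply wr_lb; auto; lra. }
assert (Hwfix : w tau = w0).
{ unfold w; rewrite wr_aff. fold q g0. unfold w0. field. lra. }
assert (Hwper : forall t, w (t + tau)%nat = w t).
{ intro t; induction t. exact Hwfix.
  simpl plus. unfold w; simpl. fold w. rewrite IHt. unfold cP; rewrite HPper. reflexivity. }
assert (Hpos : forall t, 0 < bh_sol mu K u t).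
{ intro t; induction t; simpl; auto.
  pose proof (hbounds t).
  apply Rdiv_lt_0_compat. apply Rmult_lt_0_compat; [apply Rmult_lt_0_compat|]; lra.
  assert (0 < (mu - 1) * bh_sol mu K u t) by (apply Rmult_lt_0_compat; lra). lra. }
set (v := fun t => / bh_sol mu K u t).
assert (Hvrec : forall t, v (S t) = a * v t + (1-a) / K t).
{ intro t. unfold v, a. simpl. pose proof (Hpos t). pose proof (hbounds t).
  assert (0 < (mu - 1) * bh_sol mu K u t) by (apply Rmult_lt_0_compat; lra).
  field. repeat split; lra. }
assert (Hvlb : forall t, (1 <= t)%nat -> m <= v t).
{ intros t Ht. destruct t as [|t]; [lia|]. rewrite Hvrec.
  assert (0 < v t) by (unfold v; apply Rinv_0_lt_compat; auto).
  pose proof (Hdivlb (K t) (hbounds t)). nra. }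
set (e := fun t => (1-a)/K t - cP t).
assert (He : Un_cv e 0).
{ apply (cv_bound Rm e ((1-a) * / (alpha*alpha)) 0). auto.
  apply Rmult_lt_0_compat. lra. apply Rinv_0_lt_compat; nra.
  intros t _. unfold e, cP.
  replace ((1-a)/K t - (1-a)/P t) with ((1-a) * (/K t - / P t)) by (unfold Rdiv; ring).
  rewrite Rabs_mult, (Rabs_pos_eq (1-a)) by lra. rewrite Rmult_assoc.
  apply Rmult_le_compat_l. lra.
  replace (Rm t) with (K t - P t) by (rewrite HKP; ring).
  apply inv_diff_bound; auto; apply hbounds || apply HPb. }
set (d := fun t => v t - w t).
assert (Hd : Un_cv d 0).
{ apply (lin_cv a d e). lra.
  intro t. unfold d. rewrite Hvrec. unfold w at 1. simpl. fold w. unfold e. ring.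
  exact He. }
exists (fun t => / w t), (fun t => bh_sol mu K u t - / w t).
split; [|split].
- intro; ring.
- intro t; rewrite Hwper; auto.
- apply (cv_bound d _ (/(m*m)) 1). exact Hd. apply Rinv_0_lt_compat; nra.
  intros t Ht. replace (bh_sol mu K u t) with (/ v t) by (unfold v; apply Rinv_inv).
  apply inv_diff_bound; auto.
Qed.
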